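(* Let $A\in\mathbb{R}^{m\times n}$, $B\in\mathbb{R}^{p\times n}$ with $\mathrm{rank}(B)=p\le n$, $b\in\mathbb{R}^m$, $d\in\mathbb{R}^p$, and suppose the polyhedral convex set $D:=\{x\in\mathbb{R}^n\mid Ax\ge b,\ Bx=d\}$ is nonempty. Fix $x\in\mathbb{R}^n$, and let $I(x)$, $\mathcal{D}(x)$ and $\mathcal{P}(x)$ be as defined in the context. Define \[ P_0:=I_n-[A_{I(x)}^T\ B^T]\left(\begin{bmatrix}A_{I(x)}\\ B\end{bmatrix}[A_{I(x)}^T\ B^T]\right)^{\dagger}\begin{bmatrix}A_{I(x)}\\ B\end{bmatrix}. \] Then $P_0\in\mathcal{P}(x)$.
   Context: $\Pi_D(x)$ denotes the Euclidean projection of $x$ onto $D$, $I_n$ the $n\times n$ identity, $N^\dagger$ the Moore–Penrose pseudo-inverse. For an index set $K\subseteq\{1,\dots,m\}$, $A_K$ is the submatrix of $A$ formed by the rows indexed by $K$, and $A_i$ is the $i$th row of $A$. Define $M(x)$ as the set of $(\lambda,\mu)\in\mathbb{R}^m\times\mathbb{R}^p$ such that $\Pi_D(x)-x+A^T\lambda+B^T\mu=0$, $A\Pi_D(x)-b\ge0$, $B\Pi_D(x)-d=0$, $\lambda\le0$, $\lambda^T(A\Pi_D(x)-b)=0$. Let $I(x):=\{i\in\{1,\dots,m\}\mid A_i\Pi_D(x)=b_i\}$. Let $\mathcal{D}(x)$ be the collection of index sets $K\subseteq\{1,\dots,m\}$ such that there exists $(\lambda,\mu)\in M(x)$ with $\mathrm{supp}(\lambda)\subseteq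 K\subseteq I(x)$ (where $\mathrm{supp}(\lambda)=\{i:\lambda_i\neq0\}$) and $[A_K^T\ B^T]$ has full column rank. Finally \[ \mathcal{P}(x):=\left\{I_n-[A_K^T\ B^T]\left(\begin{bmatrix}A_K\\ B\end{bmatrix}[A_K^T\ B^T]\right)^{-1}\begin{bmatrix}A_K\\ B\end{bmatrix}\ \middle|\ K\in\mathcal{D}(x)\right\}. \] *)

(* Defs.v *)
From HB Require Import structures.
From mathcomp Require Import all_boot all_order all_algebra.
From mathcomp Require Import boolp classical_sets reals.
Set Implicit Arguments. Unset Strict Implicit. Unset Printing Implicit Defensive.
Import Order.TTheory GRing.Theory Num.Theory.
Local Open Scope ring_scope.

Section Defs.
Variables (R : realType).

Definition vge (k : nat) (u v : 'cV[R]_k) : Prop := forall i, v i 0 <= u i 0.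

Definition sqnorm (k : nat) (u : 'cV[R]_k) : R := \sum_i (u i 0) ^+ 2.

Definition polyD (m p n : nat) (A : 'M[R]_(m, n)) (b : 'cV[R]_m)
  (B : 'M[R]_(p, n)) (d : 'cV[R]_p) : set 'cV[R]_n :=
  fun y => vge (A *m y) b /\ B *m y = d.

(* Euclidean projection of x onto a set S (a nearest point of S to x;
   unique when S is nonempty closed convex; x itself if no nearest point) *)
Definition proj (n : nat) (S : set 'cV[R]_n) (x : 'cV[R]_n) : 'cV[R]_n :=
  xget x (fun y => S y /\ forall z, S z -> sqnorm (x - y) <= sqnorm (x - z)).

Definition penrose (k l : nat) (N : 'M[R]_(k, l)) (X : 'M[R]_(l, k)) : Prop :=
  [/\ N *m X *m N = N, X *m N *m X = X, (N *m X)^T = N *m X & (X *m N)^T = X *m N].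
Definition mp_pinv (k l : nat) (N : 'M[R]_(k, l)) : 'M[R]_(l, k) :=
  xget 0 (penrose N).

(* A_K : rows of A indexed by K (in increasing order) *)
Definition subrows (m n : nat) (A : 'M[R]_(m, n)) (K : {set 'I_m}) : 'M[R]_(#|K|, n) :=
  \matrix_(i < #|K|, j < n) A (enum_val i) j.

Definition gmat (m p n : nat) (A : 'M[R]_(m, n)) (B : 'M[R]_(p, n)) (K : {set 'I_m})
  : 'M[R]_(n, #|K| + p) := row_mx (subrows A K)^T B^T.

Variables (m p n : nat) (A : 'M[R]_(m, n)) (b : 'cV[R]_m)
  (B : 'M[R]_(p, n)) (d : 'cV[R]_p).

Definition PiD (x : 'cV[R]_n) := proj (polyD A b B d) x.

Definition Mset (x : 'cV[R]_n) (lam : 'cV[R]_m) (mu : 'cV[R]_p) : Prop :=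
  let y := PiD x in
  [/\ y - x + A^T *m lam + B^T *m mu = 0,
      vge (A *m y - b) 0,
      B *m y - d = 0,
      vge 0 lam
    & lam^T *m (A *m y - b) = 0].

Definition Iact (x : 'cV[R]_n) : {set 'I_m} :=
  [set i | (A *m PiD x) i 0 == b i 0].

Definition inDx (x : 'cV[R]_n) (K : {set 'I_m}) : Prop :=
  [/\ exists lam mu, Mset x lam mu /\ (forall i, lam i 0 != 0 -> i \in K),
      K \subset Iact x
    & \rank (gmat A B K) = (#|K| + p)%N].

Definition projK (K : {set 'I_m}) : 'M[R]_n :=
  1%:M - gmat A B K *m invmx ((gmat A B K)^T *m gmat A B K) *m (gmat A B K)^T.

Definition Pset (x : 'cV[R]_n) : set 'M[R]_n :=
  fun P => exists K, inDx x K /\ P = projK K.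

Definition P0 (x : 'cV[R]_n) : 'M[R]_n :=
  let G := gmat A B (Iact x) in
  1%:M - G *m mp_pinv (G^T *m G) *m G^T.

End Defs.

(* Main.v *)
Require Import Defs.
From HB Require Import structures.
From mathcomp Require Import all_boot all_order all_algebra.
From mathcomp Require Import boolp classical_sets reals.
From mathcomp Require Import zify ring lra.
Import Order.TTheory GRing.Theory Num.Theory.
Local Open Scope ring_scope.

Set Implicit Arguments. Unset Strict Implicit. Unset Printing Implicit Defensive.

Section Basic.
Variable R : realType.

Lemma mxMT_eq0 (k l : nat) (M : 'M[R]_(k, l)) : M *m M^T = 0 -> M = 0.
Proof.
move=> h; apply/matrixP => i j; rewrite mxE.
have := congr1 (fun N : 'M[R]_k => N i i) h; rewrite !mxE => h2.
have h3 : M i j * M^T j i = 0.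
  apply: (@psumr_eq0P R _ xpredT (fun j => M i j * M^T j i) _ h2 j isT).
  by move=> j0 _; rewrite mxE -expr2 sqr_ge0.
by move: h3; rewrite mxE => /eqP; rewrite mulf_eq0 orbb => /eqP.
Qed.

Lemma unit_of_inj (k : nat) (M : 'M[R]_k) :
  (forall v : 'rV_k, v *m M = 0 -> v = 0) -> M \in unitmx.
Proof.
move=> h; rewrite -row_free_unit -kermx_eq0; apply/eqP/row_matrixP => i.
by rewrite row0; apply: h; rewrite -row_mul mulmx_ker row0.
Qed.

Lemma gram_unit (k l : nat) (C : 'M[R]_(k, l)) : row_free C -> C *m C^T \in unitmx.
Proof.
move=> fC; apply: unit_of_inj => v h.
have : (v *m C) *m (v *m C)^T = 0.
  by rewrite trmx_mul mulmxA -(mulmxA v) h mul0mx.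
move/mxMT_eq0 => h2; apply: (row_free_inj fC); by rewrite /= h2 mul0mx.
Qed.

Lemma colspace (k l : nat) (F : 'M[R]_(k, l)) (w : 'cV_l) :
  exists nu : 'cV_k, F *m F^T *m nu = F *m w.
Proof.
have sub : (F *m F^T <= F^T)%MS by apply: submxMl.
have sub2 : (F^T <= F *m F^T)%MS.
  rewrite -(mxrank_leqif_sup sub).2 eqn_leq (mxrankS sub) /=.
  set Kr := kermx (F *m F^T).
  have hK : Kr *m F = 0.
    apply: mxMT_eq0; by rewrite trmx_mul mulmxA -(mulmxA Kr) mulmx_ker mul0mx.
  have : (Kr <= kermx F)%MS by rewrite sub_kermx hK.
  move/mxrankS; rewrite !mxrank_ker mxrank_tr.
  have := rank_leq_row F; have := rank_leq_row (F *m F^T); lia.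
have : (w^T *m F^T <= F *m F^T)%MS := submx_trans (submxMl _ _) sub2.
case/submxP => D hD; exists D^T.
have := congr1 trmx hD; rewrite !trmx_mul !trmxK => <-; by [].
Qed.

Definition ip (k : nat) (u v : 'cV[R]_k) : R := (u^T *m v) 0 0.

Lemma ipE k (u v : 'cV[R]_k) : ip u v = \sum_i u i 0 * v i 0.
Proof. by rewrite /ip mxE; apply: eq_bigr => i _; rewrite mxE. Qed.

Lemma ipC k (u v : 'cV[R]_k) : ip u v = ip v u.
Proof. by rewrite !ipE; apply: eq_bigr => i _; rewrite mulrC. Qed.

Lemma ipDl k (u w v : 'cV[R]_k) : ip (u + w) v = ip u v + ip w v.
Proof. by rewrite !ipE -big_split; apply: eq_bigr => i _; rewrite mxE mulrDl. Qed.

Lemma ipNl k (u v : 'cV[R]_k) : ip (- u) v = - ip u v.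
Proof. by rewrite !ipE -sumrN; apply: eq_bigr => i _; rewrite mxE mulNr. Qed.

Lemma ipBl k (u w v : 'cV[R]_k) : ip (u - w) v = ip u v - ip w v.
Proof. by rewrite ipDl ipNl. Qed.

Lemma ipDr k (u w v : 'cV[R]_k) : ip v (u + w) = ip v u + ip v w.
Proof. by rewrite ipC ipDl !(ipC v). Qed.

Lemma ipBr k (u w v : 'cV[R]_k) : ip v (u - w) = ip v u - ip v w.
Proof. by rewrite ipC ipBl !(ipC v). Qed.

Lemma ipZl k a (u v : 'cV[R]_k) : ip (a *: u) v = a * ip u v.
Proof. by rewrite !ipE mulr_sumr; apply: eq_bigr => i _; rewrite mxE mulrA. Qed.

Lemma ipMT k l (M : 'M[R]_(k, l)) u v : ip (M^T *m u) v = ip u (M *m v).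
Proof. by rewrite /ip trmx_mul trmxK mulmxA. Qed.

Lemma ip_ge0 k (u : 'cV[R]_k) : 0 <= ip u u.
Proof. by rewrite ipE; apply: sumr_ge0 => i _; rewrite -expr2 sqr_ge0. Qed.

Lemma ip_eq0 k (u : 'cV[R]_k) : ip u u = 0 -> u = 0.
Proof.
rewrite ipE => h; apply/matrixP => i j; rewrite (ord1 j) mxE.
have h3 := @psumr_eq0P R _ xpredT (fun i => u i 0 * u i 0) (fun i _ => ltac:(by rewrite /= -expr2 sqr_ge0)) h i isT.
by move: h3 => /eqP; rewrite mulf_eq0 orbb => /eqP.
Qed.

Lemma sqnormE k (u : 'cV[R]_k) : sqnorm u = ip u u.
Proof. by rewrite /sqnorm ipE; apply: eq_bigr => i _; rewrite expr2. Qed.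

Lemma ip_sign k (lam v : 'cV[R]_k) : vge 0 lam -> vge v 0 -> ip lam v <= 0.
Proof.
move=> hl hv; rewrite ipE; apply: sumr_le0 => i _.
have := hl i; have := hv i; rewrite !mxE => a b; exact: mulr_le0_ge0.
Qed.

End Basic.

Set Implicit Arguments. Unset Strict Implicit. Unset Printing Implicit Defensive.

Section KKTsec.
Variable R : realType.

Lemma split_all m1 m2 (Q : 'I_(m1 + m2) -> Prop) :
  (forall i, Q (lshift m2 i)) -> (forall j, Q (rshift m1 j)) -> forall i, Q i.
Proof. move=> h1 h2 i; rewrite -(splitK i); case: (split i) => j /=; [exact: h1 | exact: h2]. Qed.

Lemma vge_col m1 m2 (u1 v1 : 'cV[R]_m1) (u2 v2 : 'cV[R]_m2) :
  vge (col_mx u1 u2) (col_mx v1 v2) <-> vge u1 v1 /\ vge u2 v2.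
Proof.
split.
  move=> h; split=> i.
    by have := h (lshift m2 i); rewrite !col_mxEu.
  by have := h (rshift m1 i); rewrite !col_mxEd.
case=> h1 h2; apply: split_all => i; by rewrite ?col_mxEu ?col_mxEd.
Qed.

Lemma vge0_col m1 m2 (u1 : 'cV[R]_m1) (u2 : 'cV[R]_m2) :
  vge 0 u1 -> vge 0 u2 -> vge 0 (col_mx u1 u2).
Proof. by move=> h1 h2; rewrite -col_mx0; apply/vge_col. Qed.

Lemma stat_eq (k : nat) (a b s1 s2 : 'cV[R]_k) : b - a + s1 + s2 = 0 -> a - b = s1 + s2.
Proof. by rewrite -addrA => /eqP; rewrite addrC addr_eq0 opprB => /eqP ->. Qed.

Lemma ip_col m1 m2 (u1 v1 : 'cV[R]_m1) (u2 v2 : 'cV[R]_m2) :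
  ip (col_mx u1 u2) (col_mx v1 v2) = ip u1 v1 + ip u2 v2.
Proof. by rewrite /ip tr_col_mx mul_row_col mxE. Qed.

Lemma ip1 (u v : 'cV[R]_1) : ip u v = u 0 0 * v 0 0.
Proof. by rewrite ipE big_ord1. Qed.

Variable n : nat.
Variable x : 'cV[R]_n.

Definition KKT m p (A : 'M[R]_(m, n)) b (B : 'M[R]_(p, n)) d (y : 'cV_n) lam mu :=
  [/\ polyD A b B d y, y - x + A^T *m lam + B^T *m mu = 0, vge 0 lam
    & forall i, lam i 0 * (A *m y - b) i 0 = 0].

Lemma kkt_ip m p (A : 'M[R]_(m, n)) b (B : 'M[R]_(p, n)) d y lam mu :
  KKT A b B d y lam mu -> forall z,
  ip (x - y) (z - y) = ip lam (A *m z - b) + ip mu (B *m z - d).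
Proof.
case=> [[_ hBy] hs _ hc] z.
rewrite (stat_eq hs) ipDl !ipMT.
have e1 : A *m (z - y) = (A *m z - b) - (A *m y - b).
  by rewrite mulmxBr opprB addrA subrK.
have e2 : ip lam (A *m y - b) = 0 by rewrite ipE big1.
by rewrite e1 ipBr e2 subr0 mulmxBr hBy.
Qed.

Lemma kkt_le m p (A : 'M[R]_(m, n)) b (B : 'M[R]_(p, n)) d y lam mu z :
  KKT A b B d y lam mu -> polyD A b B d z -> ip (x - y) (z - y) <= 0.
Proof.
move=> K [hz1 hz2]; rewrite (kkt_ip K) hz2 subrr.
have -> : ip mu 0 = 0 by rewrite ipE big1 // => i _; rewrite mxE mulr0.
rewrite addr0; apply: ip_sign; first by case: K => _ _ h _.
by move=> i; have := hz1 i; rewrite !mxE subr_ge0.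
Qed.

Lemma sq_split (y z : 'cV[R]_n) :
  ip (x - z) (x - z) = ip (x - y) (x - y) - 2 * ip (x - y) (z - y) + ip (z - y) (z - y).
Proof.
have -> : x - z = (x - y) - (z - y) by rewrite opprB addrA subrK.
set u := x - y; set v := z - y; clearbody u v.
rewrite ipBl !ipBr (ipC v u); lra.
Qed.

Lemma kkt_nearest m p (A : 'M[R]_(m, n)) b (B : 'M[R]_(p, n)) d y lam mu z :
  KKT A b B d y lam mu -> polyD A b B d z -> sqnorm (x - y) <= sqnorm (x - z).
Proof.
move=> K hz; rewrite !sqnormE (sq_split y z).
have := kkt_le K hz; have := ip_ge0 (z - y); lra.
Qed.

Lemma kkt_unique m p (A : 'M[R]_(m, n)) b (B : 'M[R]_(p, n)) d y lam mu y0 :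
  KKT A b B d y lam mu -> polyD A b B d y0 ->
  sqnorm (x - y0) <= sqnorm (x - y) -> y0 = y.
Proof.
move=> K hz; rewrite !sqnormE (sq_split y y0) => h.
have := kkt_le K hz; have := ip_ge0 (y0 - y) => h1 h2.
have h3 : ip (y0 - y) (y0 - y) = 0 by lra.
by apply/eqP; rewrite -subr_eq0; apply/eqP; apply: ip_eq0.
Qed.

End KKTsec.

Set Implicit Arguments. Unset Strict Implicit. Unset Printing Implicit Defensive.

Section KKTex.
Variable R : realType.
Variable n : nat.
Variable x : 'cV[R]_n.

Lemma mxBE k l (M N : 'M[R]_(k, l)) i j : (M - N) i j = M i j - N i j.
Proof. by rewrite !mxE. Qed.

Lemma kkt_step m p (a : 'M[R]_(1, n)) (A' : 'M[R]_(m, n)) (b1 : 'cV[R]_1) (b' : 'cV[R]_m)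
  (B : 'M[R]_(p, n)) (d : 'cV[R]_p) :
  (forall p' (B' : 'M[R]_(p', n)) d', (exists z, polyD A' b' B' d' z) ->
      exists y lam mu, KKT x A' b' B' d' y lam mu) ->
  (exists z, polyD (col_mx a A') (col_mx b1 b') B d z) ->
  exists y lam mu, KKT x (col_mx a A') (col_mx b1 b') B d y lam mu.
Proof.
move=> IH [z [hz1 hz2]].
rewrite mul_col_mx in hz1; case/vge_col: hz1 => hza hzA.
have [y' [lam' [mu' K']]] := IH p B d (ex_intro _ z (conj hzA hz2)).
have K'c := K'.
case: K'c => [[hy'A hy'B] hs' hl' hc'].
case: (lerP (b1 0 0) ((a *m y') 0 0)) => hcase.
  exists y', (col_mx 0 lam'), mu'; split.
  - split=> //; rewrite mul_col_mx; apply/vge_col; split=> // i.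
    by rewrite (ord1 i).
  - by rewrite tr_col_mx mul_row_col mulmx0 add0r.
  - by apply: vge0_col => // i; rewrite !mxE.
  - rewrite mul_col_mx opp_col_mx add_col_mx; apply: split_all => i.
      by rewrite !col_mxEu mxE mul0r.
    by rewrite !col_mxEd.
have hza0 : b1 0 0 <= (a *m z) 0 0 := hza 0.
set t := (b1 0 0 - (a *m y') 0 0) / ((a *m z) 0 0 - (a *m y') 0 0).
have hden : 0 < (a *m z) 0 0 - (a *m y') 0 0 by lra.
have ht0 : 0 <= t by rewrite /t divr_ge0 //; lra.
have ht1 : t <= 1 by rewrite /t ler_pdivrMr // mul1r; lra.
have htm : t * ((a *m z) 0 0 - (a *m y') 0 0) = b1 0 0 - (a *m y') 0 0.
  by rewrite /t divfK //; apply/eqP; lra.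
set w := y' + t *: (z - y').
have hMw : forall k (M : 'M[R]_(k, n)) i, (M *m w) i 0 = (M *m y') i 0 + t * ((M *m z) i 0 - (M *m y') i 0).
  by move=> k M i; rewrite /w mulmxDr -scalemxAr mulmxBr !mxE.
have hw : polyD A' b' (col_mx a B) (col_mx b1 d) w.
  split.
    move=> i; rewrite hMw; have := hzA i; have := hy'A i => h1 h2.
    have : 0 <= (1 - t) * ((A' *m y') i 0 - b' i 0) by apply: mulr_ge0; lra.
    have : 0 <= t * ((A' *m z) i 0 - b' i 0) by apply: mulr_ge0; lra.
    nra.
  rewrite mul_col_mx; congr col_mx.
    apply/matrixP => i j; rewrite (ord1 i) (ord1 j) hMw; lra.
  by rewrite /w mulmxDr -scalemxAr mulmxBr hy'B hz2 subrr scaler0 addr0.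
have [y'' [lam'' [mu'' K'']]] := IH _ _ _ (ex_intro _ w hw).
set mu1 := usubmx (mu'' : 'cV_(1 + p)); set muB := dsubmx (mu'' : 'cV_(1 + p)).
have emu : mu'' = col_mx mu1 muB by rewrite vsubmxK.
have K''c := K''.
case: K''c => [[hy''A hy''B] hs'' hl'' hc''].
rewrite mul_col_mx in hy''B; case/eq_col_mx: hy''B => hay'' hBy''.
have hmu1 : mu1 0 0 <= 0.
  rewrite leNgt; apply/negP => hpos.
  have h1 := kkt_le K' (conj hy''A hBy'' : polyD A' b' B d y'').
  have h2 := kkt_ip K'' y'.
  rewrite emu mul_col_mx opp_col_mx add_col_mx ip_col hy'B subrr in h2.
  have e0 : ip muB 0 = 0 by rewrite ipE big1 // => i _; rewrite ?mxE ?mulr0.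
  rewrite e0 in h2.
  rewrite ip1 mxBE addr0 in h2.
  have h3 : ip lam'' (A' *m y' - b') <= 0.
    apply: ip_sign => // i; have := hy'A i; by rewrite !mxE subr_ge0.
  have h4 : mu1 0 0 * ((a *m y') 0 0 - b1 0 0) < 0.
    by rewrite pmulr_rlt0 // subr_lt0.
  have h5 : ip (x - y'') (y' - y'') + ip (x - y') (y'' - y') = ip (y' - y'') (y' - y'').
    rewrite !ipBl !ipBr; have := ipC y'' y'; have := ipC y' x; have := ipC y'' x; lra.
  have := ip_ge0 (y' - y'').
  lra.
exists y'', (col_mx mu1 lam''), muB; split.
- split=> //; rewrite mul_col_mx; apply/vge_col; split=> // i.
  by rewrite (ord1 i) hay''.
- rewrite tr_col_mx mul_row_col -hs'' emu tr_col_mx mul_row_col.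
  by rewrite !addrA (addrAC _ (a^T *m mu1)).
- apply: vge0_col => // i; by move: hmu1; rewrite (ord1 i) !mxE.
- rewrite mul_col_mx opp_col_mx add_col_mx; apply: split_all => i.
    by rewrite !col_mxEu (ord1 i) hay'' subrr !mxE mulr0.
  by rewrite !col_mxEd.
Qed.

Lemma kkt_exists m : forall p (A : 'M[R]_(m, n)) b (B : 'M[R]_(p, n)) d,
  (exists z, polyD A b B d z) -> exists y lam mu, KKT x A b B d y lam mu.
Proof.
elim: m => [|m IH] p A b B d.
  case=> z [_ hz].
  have [nu hnu] := colspace B (x - z).
  exists (x - B^T *m nu), 0, nu; split.
  - split; first by move=> [].
    by rewrite mulmxBr mulmxA hnu mulmxBr hz opprB addrC subrK.
  - rewrite mulmx0 addr0; apply/matrixP => i j; rewrite !mxE; lra.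
  - by move=> [].
  - by move=> [].
move=> hz.
have := @kkt_step m p (usubmx (A : 'M_(1 + m, n))) (dsubmx (A : 'M_(1 + m, n)))
  (usubmx (b : 'cV_(1 + m))) (dsubmx (b : 'cV_(1 + m))) B d (fun p' => IH p' _ _).
by rewrite !vsubmxK; apply.
Qed.

End KKTex.

Unset Implicit Arguments. Set Strict Implicit. Unset Printing Implicit Defensive.

Section Indep.
Variables (R : realType) (m p n : nat) (A : 'M[R]_(m, n)) (B : 'M[R]_(p, n)).

Definition suppin (al : 'cV[R]_m) (K : {set 'I_m}) := forall i, al i 0 != 0 -> i \in K.
Definition indep K := forall (al : 'cV[R]_m) (be : 'cV[R]_p),
  suppin al K -> A^T *m al + B^T *m be = 0 -> al = 0 /\ be = 0.
Definition restr K (al : 'cV[R]_m) : 'cV[R]_#|K| := \col_k al (enum_val k) 0.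
Definition ext K (u : 'cV[R]_#|K|) : 'cV[R]_m :=
  \col_i \sum_(k < #|K| | enum_val k == i) u k 0.

Arguments ext : clear implicits.
Arguments restr : clear implicits.

Lemma restrE (K : {set 'I_m}) al : suppin al K -> (subrows A K)^T *m restr K al = A^T *m al.
Proof.
move=> hs; apply/matrixP => j c; rewrite (ord1 c) !mxE.
rewrite (bigID (mem K)) /= [X in _ + X]big1 ?addr0; last first.
  move=> i hi; case: (eqVneq (al i 0) 0) => [->|/hs hK]; first by rewrite mulr0.
  by rewrite hK in hi.
rewrite [in RHS]big_enum_val; apply: eq_bigr => k _; by rewrite !mxE.
Qed.

Lemma gmat_mul (K : {set 'I_m}) (u : 'cV[R]_#|K|) (v : 'cV[R]_p) : gmat A B K *m col_mx u v = (subrows A K)^T *m u + B^T *m v.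
Proof. by rewrite /gmat mul_row_col. Qed.

Lemma ext_supp (K : {set 'I_m}) (u : 'cV[R]_#|K|) : suppin (ext K u) K.
Proof.
move=> i; rewrite mxE; apply: contraR => hi; rewrite big_pred0 // => k.
by apply/negP => /eqP hk; move: hi; rewrite -hk enum_valP.
Qed.

Lemma restr_ext (K : {set 'I_m}) (u : 'cV[R]_#|K|) : restr K (ext K u) = u.
Proof.
apply/matrixP => k c; rewrite (ord1 c) !mxE (big_pred1 k) // => k'.
by rewrite /=; apply/eqP/eqP => [/enum_val_inj|->].
Qed.

Lemma suppin0 K : suppin 0 K.
Proof. by move=> i; rewrite mxE eqxx. Qed.

Lemma gmat_span (K : {set 'I_m}) (al : 'cV[R]_m) (be : 'cV[R]_p) : suppin al K ->
  A^T *m al + B^T *m be = gmat A B K *m col_mx (restr K al) be.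
Proof. by move=> hs; rewrite gmat_mul restrE. Qed.

Lemma gmat_inj (K : {set 'I_m}) : indep K -> forall w : 'cV[R]_(#|K| + p), gmat A B K *m w = 0 -> w = 0.
Proof.
move=> hK w; rewrite -[w]vsubmxK gmat_mul.
set u := usubmx w; set v := dsubmx w.
rewrite -{1}(restr_ext K u) (restrE K _ (ext_supp K u)) => h.
have [h1 h2] := hK _ _ (ext_supp K u) h.
by rewrite -(restr_ext K u) h1 h2; apply/matrixP => i j; rewrite !mxE; case: splitP => k _; rewrite !mxE //; apply: big1.
Qed.

Lemma gmat_rank (K : {set 'I_m}) : indep K -> \rank (gmat A B K) = (#|K| + p)%N.
Proof.
move=> hK; rewrite -mxrank_tr.
have : row_free (gmat A B K)^T.
  rewrite -kermx_eq0; apply/eqP/row_matrixP => r; rewrite row0.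
  set v := row r _.
  have h : v *m (gmat A B K)^T = 0 by rewrite /v -row_mul mulmx_ker row0.
  have := congr1 trmx h; rewrite trmx_mul trmxK trmx0 => /(gmat_inj K hK) h2.
  by rewrite -[v]trmxK h2 trmx0.
by move/eqP.
Qed.

Lemma gmat_col_l (K : {set 'I_m}) k : col (lshift p k) (gmat A B K) = A^T *m delta_mx (enum_val k) 0.
Proof. by rewrite -colE; apply/matrixP => r c; rewrite !mxE (unsplitK (inl k : 'I_#|K| + 'I_p)) !mxE. Qed.

Lemma gmat_col_r (K : {set 'I_m}) j : col (rshift #|K| j) (gmat A B K) = B^T *m delta_mx j 0.
Proof. by rewrite -colE; apply/matrixP => r c; rewrite !mxE (unsplitK (inr j : 'I_#|K| + 'I_p)) !mxE. Qed.

Lemma gmat_factor (J1 J2 : {set 'I_m}) :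
  (forall i, i \in J1 -> exists al be, suppin al J2 /\ A^T *m delta_mx i 0 = A^T *m al + B^T *m be) ->
  exists C, gmat A B J1 = gmat A B J2 *m C.
Proof.
move=> h.
have hcol : forall j, exists w, col j (gmat A B J1) = gmat A B J2 *m w.
  apply: split_all => [k|j].
    have [al [be [hs he]]] := h _ (enum_valP k).
    by exists (col_mx (restr J2 al) be); rewrite gmat_col_l he (gmat_span J2 al be hs).
  exists (col_mx (restr J2 0) (delta_mx j 0)).
  by rewrite gmat_col_r -(gmat_span J2 0 _ (suppin0 J2)) mulmx0 add0r.
have [w hw] := fin_all_exists hcol.
exists (\matrix_(k, j) w j k 0); apply/matrixP => r j.
have := congr1 (fun M : 'cV[R]_n => M r 0) (hw j); rewrite !mxE => ->.
by apply: eq_bigr => k _; rewrite !mxE.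
Qed.

End Indep.

Arguments suppin {R m}.
Arguments indep {R m p n}.
Arguments gmat_inj {R m p n A B K}.
Arguments gmat_rank {R m p n A B K}.
Arguments gmat_factor {R m p n A B J1 J2}.
Arguments suppin0 {R m}.

Unset Printing Implicit Defensive.

Section Cara.
Variables (R : realType) (m p n : nat) (A : 'M[R]_(m, n)) (B : 'M[R]_(p, n)).
Hypothesis hB : \rank B = p.

Lemma BT_inj (be : 'cV[R]_p) : B^T *m be = 0 -> be = 0.
Proof.
move=> h; have fB : row_free B by rewrite /row_free hB.
have h2 : be^T *m B = 0 *m B by rewrite mul0mx; have := congr1 trmx h; rewrite trmx_mul trmxK trmx0.
by rewrite -[be]trmxK (row_free_inj fB h2) trmx0.
Qed.

Lemma notindep (K : {set 'I_m}) : ~ indep A B K ->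
  exists al be, [/\ suppin al K, A^T *m al + B^T *m be = 0 & exists i, 0 < al i 0].
Proof.
move=> hn; apply: contrapT => hne; apply: hn => al be hs he.
apply: contrapT => hnz; apply: hne.
have hal0 : al <> 0.
  move=> h0; apply: hnz; split=> //; apply: BT_inj.
  by move: he; rewrite h0 mulmx0 add0r.
have [i hi] : exists i, al i 0 != 0.
  case: (pselect (exists i, al i 0 != 0)) => // hx; exfalso; apply: hal0.
  apply/matrixP => i j; rewrite (ord1 j) mxE; apply/eqP/negPn/negP => hi.
  by apply: hx; exists i.
case: (ltrP 0 (al i 0)) => hpos.
  by exists al, be; split=> //; exists i.
have hneg : al i 0 < 0 by rewrite lt_neqAle hi hpos.
exists (- al), (- be); split.
- by move=> j; rewrite mxE oppr_eq0; apply: hs.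
- by rewrite !mulmxN -opprD he oppr0.
- by exists i; rewrite mxE oppr_gt0.
Qed.

Definition supp (lam : 'cV[R]_m) : {set 'I_m} := [set i | lam i 0 != 0].

Lemma cara_step (lam : 'cV[R]_m) (mu : 'cV[R]_p) :
  ~ indep A B (supp lam) -> vge 0 lam ->
  exists lam' mu', [/\ vge 0 lam', supp lam' \proper supp lam
    & A^T *m lam' + B^T *m mu' = A^T *m lam + B^T *m mu].
Proof.
move=> hn hl.
have [al [be [hs he [i0 hi0]]]] := notindep _ hn.
pose F := fun i => - lam i 0 / al i 0.
case: (@arg_minP _ R _ i0 (fun i => 0 < al i 0) F hi0) => im him hmin.
set t := F im.
have hlm : lam im 0 <= 0 by have := hl im; rewrite mxE.
have t0 : 0 <= t by rewrite /t /F divr_ge0 ?oppr_ge0 // ltW.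
have hE : forall i, (lam + t *: al) i 0 = lam i 0 + t * al i 0 by move=> i; rewrite !mxE.
exists (lam + t *: al), (mu + t *: be); split.
- move=> i; rewrite hE mxE.
  have hli : lam i 0 <= 0 by have := hl i; rewrite mxE.
  case: (ltrP 0 (al i 0)) => hai.
    have := hmin i hai; rewrite /F -/t ler_pdivlMr // => h; rewrite /t /F; lra.
  have : t * al i 0 <= 0 by apply: mulr_ge0_le0.
  lra.
- apply/properP; split.
    apply/fintype.subsetP => i; rewrite !inE hE; apply: contraNneq => h0.
    have : al i 0 = 0.
      apply/eqP; apply: contraTT isT => /hs; by rewrite inE h0 eqxx.
    by move=> ->; rewrite mulr0 addr0 h0.
  exists im; first by apply: hs; rewrite gt_eqF.
  by rewrite inE hE /t /F divfK ?addrN ?eqxx // gt_eqF.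
- rewrite !mulmxDr -!scalemxAr addrACA -scalerDr he scaler0 addr0.
  done.
Qed.

Lemma cara k : forall (lam : 'cV[R]_m) (mu : 'cV[R]_p), (#|supp lam| <= k)%N -> vge 0 lam ->
  exists lam' mu', [/\ vge 0 lam', supp lam' \subset supp lam,
    A^T *m lam' + B^T *m mu' = A^T *m lam + B^T *m mu & indep A B (supp lam')].
Proof.
elim: k => [|k IH] lam mu hk hl.
  case: (pselect (indep A B (supp lam))) => hind.
    by exists lam, mu; split.
  have [lam' [mu' [_ hpr _]]] := cara_step lam mu hind hl.
  by move: (leq_trans (proper_card hpr) hk); rewrite ltn0.
case: (pselect (indep A B (supp lam))) => hind.
  by exists lam, mu; split.
have [lam' [mu' [hl' hpr he]]] := cara_step lam mu hind hl.
have hk' : (#|supp lam'| <= k)%N by rewrite -ltnS; apply: leq_trans (proper_card hpr) hk.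
have [lam'' [mu'' [hl'' hs'' he'' hi'']]] := IH lam' mu' hk' hl'.
exists lam'', mu''; split=> //.
  by apply: fintype.subset_trans hs'' (proper_sub hpr).
by rewrite he'' he.
Qed.

Lemma maxext (S I : {set 'I_m}) : S \subset I -> indep A B S ->
  exists K : {set 'I_m}, [/\ S \subset K, K \subset I, indep A B K
    & forall i, i \in I -> i \notin K -> ~ indep A B (i |: K)].
Proof.
move=> hSI hS.
suff H : forall k (K : {set 'I_m}), (#|I :\: K| <= k)%N -> S \subset K -> K \subset I -> indep A B K ->
  exists K' : {set 'I_m}, [/\ S \subset K', K' \subset I, indep A B K'
    & forall i, i \in I -> i \notin K' -> ~ indep A B (i |: K')].
  by apply: (H _ S (leqnn _)).
elim=> [|k IH] K hk hSK hKI hK.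
  exists K; split=> // i hi hnK hind.
  have : (0 < #|I :\: K|)%N by apply/card_gt0P; exists i; rewrite inE hi hnK.
  lia.
case: (pselect (exists i, [/\ i \in I, i \notin K & indep A B (i |: K)])) => [[i [hi hnK hind]]|hno].
  have hpr : I :\: (i |: K) \proper I :\: K.
    apply/properP; split; first by apply: finset.setDS; apply: finset.subsetUr.
    by exists i; rewrite !inE ?eqxx ?hi ?hnK.
  apply: (IH (i |: K)).
  - by rewrite -ltnS; apply: leq_trans (proper_card hpr) hk.
  - by apply: fintype.subset_trans hSK (finset.subsetUr _ _).
  - by rewrite finset.subUset finset.sub1set hi hKI.
  - exact: hind.
exists K; split=> // i hi hnK hind; apply: hno; by exists i.
Qed.

End Cara.
Arguments supp {R m}.

Unset Printing Implicit Defensive.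

Section Pinv.
Variable R : realType.

Lemma penrose_uniq k l (N : 'M[R]_(k, l)) X1 X2 : penrose N X1 -> penrose N X2 -> X1 = X2.
Proof.
case=> p11 p12 p13 p14 [p21 p22 p23 p24].
have e1 : X1 = X1 *m N *m X2.
  have h : X1 *m (N *m X2 *m N *m X1)^T = X1 by rewrite p21 p13 mulmxA p12.
  rewrite -[in LHS]h (_ : N *m X2 *m N *m X1 = (N *m X2) *m (N *m X1)); last by rewrite !mulmxA.
  by rewrite trmx_mul p13 p23 !mulmxA p12.
have e2 : X2 = X1 *m N *m X2.
  have h : (X2 *m N *m X1 *m N)^T *m X2 = X2.
    have -> : X2 *m N *m X1 *m N = X2 *m (N *m X1 *m N) by rewrite !mulmxA.
    by rewrite p11 p24 p22.
  rewrite -[in LHS]h (_ : X2 *m N *m X1 *m N = (X2 *m N) *m (X1 *m N)); last by rewrite !mulmxA.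
  by rewrite trmx_mul p14 p24 -!mulmxA (mulmxA X2 N X2) p22.
by rewrite e1 -e2.
Qed.

Lemma CCt_unit k r (C : 'M[R]_(r, k)) (E : 'M[R]_(k, r)) :
  C *m E = 1%:M -> C *m C^T \in unitmx.
Proof.
move=> hCE; apply: unit_of_inj => v h.
have h1 : (v *m C) *m (v *m C)^T = 0 by rewrite trmx_mul !mulmxA -(mulmxA v) h mul0mx.
by rewrite -[v]mulmx1 -hCE mulmxA (mxMT_eq0 h1) mul0mx.
Qed.

Lemma pinv_explicit k r (C : 'M[R]_(r, k)) (M : 'M[R]_r) (E : 'M[R]_(k, r)) :
  C *m E = 1%:M -> M \in unitmx ->
  let S := C *m C^T in let P := C^T *m invmx S in
  penrose (C^T *m M *m C) (P *m invmx M *m P^T).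
Proof.
move=> hCE hM S P.
have hS : S \in unitmx by apply: CCt_unit hCE.
have hCP : C *m P = 1%:M by rewrite /P mulmxA mulmxV.
have hPC : P^T *m C^T = 1%:M by rewrite -trmx_mul hCP trmx1.
have hsym : C^T *m P^T = P *m C.
  rewrite /P trmx_mul trmx_inv /S trmx_mul trmxK mulmxA; done.
clearbody P.
have eCP : forall k' (Y : 'M[R]_(k', r)), Y *m C *m P = Y by move=> k' Y; rewrite -mulmxA hCP mulmx1.
have ePC : forall k' (Y : 'M[R]_(k', r)), Y *m P^T *m C^T = Y by move=> k' Y; rewrite -mulmxA hPC mulmx1.
have eMMi : forall k' (Y : 'M[R]_(k', r)), Y *m M *m invmx M = Y by move=> k' Y; rewrite -mulmxA mulmxV ?mulmx1.
have eMiM : forall k' (Y : 'M[R]_(k', r)), Y *m invmx M *m M = Y by move=> k' Y; rewrite -mulmxA mulVmx ?mulmx1.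
split.
- by rewrite !mulmxA eCP eMMi ePC.
- by rewrite !mulmxA ePC eMiM eCP.
- by rewrite !mulmxA eCP eMMi trmx_mul !trmxK hsym.
- by rewrite !mulmxA ePC eMiM trmx_mul hsym.
Qed.

Lemma pinv_sandwich k r l (C : 'M[R]_(r, k)) (M : 'M[R]_r) (E : 'M[R]_(k, r)) (H : 'M[R]_(l, r)) :
  C *m E = 1%:M ->
  let S := C *m C^T in let P := C^T *m invmx S in
  H *m C *m (P *m invmx M *m P^T) *m (H *m C)^T = H *m invmx M *m H^T.
Proof.
move=> hCE S P.
have hS : S \in unitmx by apply: CCt_unit hCE.
have hCP : C *m P = 1%:M by rewrite /P mulmxA mulmxV.
have hPC : P^T *m C^T = 1%:M by rewrite -trmx_mul hCP trmx1.
clearbody P.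
have eCP : forall k' (Y : 'M[R]_(k', r)), Y *m C *m P = Y by move=> k' Y; rewrite -mulmxA hCP mulmx1.
have ePC : forall k' (Y : 'M[R]_(k', r)), Y *m P^T *m C^T = Y by move=> k' Y; rewrite -mulmxA hPC mulmx1.
by rewrite trmx_mul !mulmxA eCP ePC.
Qed.

End Pinv.

Unset Printing Implicit Defensive.

Theorem theorem2p3 (R : realType) (m p n : nat)
  (A : 'M[R]_(m, n)) (B : 'M[R]_(p, n)) (b : 'cV[R]_m) (d : 'cV[R]_p) :
  \rank B = p -> (p <= n)%N ->
  (exists y, polyD A b B d y) ->
  forall x : 'cV[R]_n, Pset A b B d x (P0 A b B d x).
Proof.
move=> hB _ hz x.
have [y [lam [mu KK]]] := kkt_exists x hz.
have hPi : PiD A b B d x = y.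
  rewrite /PiD /proj; apply: xget_unique.
    split; first by case: KK.
    by move=> z hz'; apply: (kkt_nearest KK hz').
  by move=> y0 [hy0 hmin]; apply: (kkt_unique KK hy0 (hmin y _)); case: KK.
have KKc := KK.
case: KKc => [[hyA hyB] hs hl hc].
set I := Iact A b B d x.
have hsI : supp lam \subset I.
  apply/fintype.subsetP => i; rewrite /I /Iact !inE hPi => hi.
  have := hc i; move/eqP; rewrite mulf_eq0 (negbTE hi) /= mxBE subr_eq0; done.
have [lam' [mu' [hl' hs' he' hi']]] := @cara _ _ _ _ A B hB _ lam mu (leqnn _) hl.
have [K [hSK hKI hK hmax]] := @maxext _ _ _ _ A B hB (supp lam') I (fintype.subset_trans hs' hsI) hi'.
have hdelta : forall (i : 'I_m) (J : {set 'I_m}), i \in J -> suppin (delta_mx i 0 : 'cV[R]_m) J.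
  move=> i J hiJ j; rewrite mxE; case: (eqVneq j i) => [-> _ //|_].
  by rewrite /= mulr0n eqxx.
exists K; split.
  split.
  - exists lam', mu'; split.
      rewrite /Mset hPi; split.
      + by rewrite -addrA he' addrA.
      + by move=> i; have := hyA i; rewrite mxBE !mxE subr_ge0.
      + by rewrite hyB subrr.
      + exact: hl'.
      + apply/matrixP => i0 j0; rewrite (ord1 i0) (ord1 j0) [RHS]mxE.
        change (ip lam' (A *m y - b) = 0); rewrite ipE big1 // => i _.
        case: (eqVneq (lam' i 0) 0) => [->|h]; first by rewrite mul0r.
        have h2 : lam i 0 != 0.
          by have := fintype.subsetP hs' i; rewrite !inE; apply.
        by have := hc i; move/eqP; rewrite mulf_eq0 (negbTE h2) /= => /eqP ->; rewrite mulr0.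
    by move=> i hi; apply: (fintype.subsetP hSK); rewrite inE.
  - exact: hKI.
  - exact: gmat_rank hK.
rewrite /P0 -/I /=.
set H := gmat A B K; set G := gmat A B I.
have [C hC] : exists C, G = H *m C.
  apply: gmat_factor => i hi.
  case: (boolP (i \in K)) => hiK.
    by exists (delta_mx i 0), 0; split; [apply: hdelta | rewrite mulmx0 addr0].
  have [al [be [hsa hea [j hj]]]] := @notindep _ _ _ _ A B hB _ (hmax i hi hiK).
  have hai : al i 0 != 0.
    apply/negP => /eqP hai0.
    have hsK : suppin al K.
      move=> k hk; have := hsa k hk; rewrite !inE; case/orP => // /eqP ek.
      by move: hk; rewrite ek hai0 eqxx.
    have [al0 _] := hK al be hsK hea.
    by move: hj; rewrite al0 mxE ltxx.
  set c := - (al i 0)^-1.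
  exists (c *: (al - al i 0 *: delta_mx i 0)), (c *: be); split.
    move=> k; rewrite !mxE.
    case: (eqVneq k i) => [->|hki0].
      by rewrite /= mulr1n mulr1 subrr mulr0 eqxx.
    have hki := negbTE hki0.
    rewrite /= mulr0n mulr0 subr0 mulf_eq0 negb_or => /andP [_ hk].
    have := hsa k hk; rewrite !inE hki /=; done.
  rewrite -!scalemxAr -scalerDr mulmxBr -scalemxAr addrAC hea add0r scalerN scalerA.
  by rewrite /c mulNr mulVf // scaleN1r opprK.
have [E hE] : exists E, H = G *m E.
  apply: gmat_factor => i hi; exists (delta_mx i 0), 0; split.
    by apply: hdelta; apply: (fintype.subsetP hKI).
  by rewrite mulmx0 addr0.
have hCE : C *m E = 1%:M.
  set D := C *m E - 1%:M.
  have hD : H *m D = 0 by rewrite /D mulmxBr mulmx1 mulmxA -hC -hE subrr.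
  have : D = 0.
    apply/matrixP => i j.
    have h0 : H *m (D *m (delta_mx j 0 : 'cV[R]_(#|K| + p))) = 0 by rewrite mulmxA hD mul0mx.
    have h := gmat_inj hK (D *m delta_mx j 0) h0.
    by have := congr1 (fun M : 'cV[R]_(#|K| + p) => M i 0) h; rewrite -colE !mxE.
  by move/eqP; rewrite subr_eq0 => /eqP.
have hM : H^T *m H \in unitmx.
  apply: unit_of_inj => v h.
  have h1 : (v *m H^T) *m (v *m H^T)^T = 0 by rewrite trmx_mul trmxK !mulmxA -(mulmxA v) h mul0mx.
  have h2 := mxMT_eq0 h1.
  have h3 : H *m v^T = 0 by rewrite -[H]trmxK -trmx_mul h2 trmx0.
  by rewrite -[v]trmxK (gmat_inj hK _ h3) trmx0.
have hpen := pinv_explicit _ _ _ C (H^T *m H) E hCE hM.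
have eN : G^T *m G = C^T *m (H^T *m H) *m C by rewrite hC trmx_mul !mulmxA.
rewrite /mp_pinv eN.
rewrite (xget_unique _ hpen); last by move=> X hX; exact: (penrose_uniq _ _ _ _ _ _ hX hpen).
by rewrite /projK -/H hC (pinv_sandwich _ _ _ _ C (H^T *m H) E H hCE).
Qed.
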